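(* Let $x>1$ be an irrational real number and let $(x_n)_{n\geq1}$ be any sequence of rational numbers with $x_n\geq1$ and $x_n\to x$. Write the Taylor expansion at $q=0$ of the $q$-deformed rational $[x_n]_q$ as $[x_n]_q=\sum_{k\geq0}\varkappa_{n,k}q^k$. Then for every fixed $k\geq0$ the sequence $(\varkappa_{n,k})_{n\geq1}$ is eventually constant. Its eventual value $\varkappa_k=\lim_{n\to\infty}\varkappa_{n,k}$ is an integer, and the sequence $(\varkappa_k)_{k\geq0}$ does not depend on the choice of the sequence $(x_n)$ converging to $x$.
   Context: For an integer $a\geq1$ put $[a]_q=1+q+\cdots+q^{a-1}$ and $[a]_{q^{-1}}=1+q^{-1}+\cdots+q^{-(a-1)}$. Every rational number $r/s>1$ has a unique expansion as a regular continued fraction of even length, $$r/s=[a_1,\ldots,a_{2m}]=a_1+\cfrac{1}{a_2+\cfrac{1}{\ddots+\cfrac{1}{a_{2m}}}},$$ with all $a_i\in\mathbb{Z}_{\geq1}$. Its $q$-deformation is the rational function $$\left[\tfrac{r}{s}\right]_q=[a_1]_q+\cfrac{q^{a_1}}{[a_2]_{q^{-1}}+\cfrac{q^{-a_2}}{[a_3]_q+\cfrac{q^{a_3}}{[a_4]_{q^{-1}}+\cfrac{q^{-a_4}}{\ddots+\cfrac{q^{a_{2m-1}}}{[a_{2m}]_{q^{-1}}}}}}}.$$ One also sets $[1]_q=1$; for integers $n\geq2$ this gives $[n]_q=1+q+\cdots+q^{n-1}$. Each $[r/s]_q$ is a quotient $\mathcal{R}(q)/\mathcal{S}(q)$ of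 polynomials with nonnegative integer coefficients, each having constant term $1$. It is identified with its Taylor expansion at $q=0$, which is an element of $\mathbb{Z}[[q]]$. *)

(* Defs.v *)
From Stdlib Require Import Reals QArith Qreals ZArith List Arith.
Import ListNotations.

(* ---------- Integer polynomials, coefficients listed from degree 0 upward ---------- *)
Fixpoint padd (p q : list Z) : list Z :=
  match p, q with
  | [], _ => q
  | _, [] => p
  | a :: p', b :: q' => (a + b)%Z :: padd p' q'
  end.

Definition pscale (c : Z) (p : list Z) : list Z := map (Z.mul c) p.

Fixpoint pmul (p q : list Z) : list Z :=
  match p with
  | [] => []
  | a :: p' => padd (pscale a q) (0%Z :: pmul p' q)
  end.

Definition pshift (n : nat) (p : list Z) : list Z := repeat 0%Z n ++ p.

(* ---------- Laurent rational functions  q^sh * nu(q) / de(q) ---------- *)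
Record LFrac := mkLF { sh : Z; nu : list Z; de : list Z }.

Definition lf_one : LFrac := mkLF 0 [1%Z] [1%Z].
Definition lf_mon (k : Z) : LFrac := mkLF k [1%Z] [1%Z].
Definition qint (a : nat) : LFrac := mkLF 0 (repeat 1%Z a) [1%Z].
Definition qint_inv (a : nat) : LFrac :=                               (* [a]_{q^{-1}} *)
  mkLF (- (Z.of_nat a - 1)) (repeat 1%Z a) [1%Z].

Definition lf_add (x y : LFrac) : LFrac :=
  let m := Z.min (sh x) (sh y) in
  mkLF m
    (padd (pshift (Z.to_nat (sh x - m)) (pmul (nu x) (de y)))
          (pshift (Z.to_nat (sh y - m)) (pmul (nu y) (de x))))
    (pmul (de x) (de y)).

Definition lf_mul (x y : LFrac) : LFrac :=
  mkLF (sh x + sh y) (pmul (nu x) (nu y)) (pmul (de x) (de y)).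

Definition lf_inv (x : LFrac) : LFrac := mkLF (- sh x) (de x) (nu x).

Fixpoint lz (l : list Z) : nat :=
  match l with
  | z :: t => if Z.eqb z 0 then S (lz t) else 0
  | [] => 0
  end.

(* coefficients c_0..c_n of the power series P/D (D(0) <> 0), i.e. D * C = P *)
Fixpoint ser_upto (P D : list Q) (n : nat) : list Q :=
  match n with
  | O => [nth 0 P 0%Q / nth 0 D 0%Q]
  | S m =>
      let cs := ser_upto P D m in
      cs ++ [ (nth (S m) P 0%Q
               - fold_right Qplus 0%Q
                   (map (fun i => nth i D 0%Q * nth (S m - i) cs 0%Q) (seq 1 (S m))))
              / nth 0 D 0%Q ]%Q
  end.

(* coefficient of q^k in the Laurent expansion at q = 0 of x *)
Definition lf_coef (x : LFrac) (k : nat) : Q :=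
  let j := lz (de x) in
  let P := map inject_Z (nu x) in
  let D := map inject_Z (skipn j (de x)) in
  let idx := (Z.of_nat k - sh x + Z.of_nat j)%Z in
  if (idx <? 0)%Z then 0%Q
  else nth (Z.to_nat idx) (ser_upto P D (Z.to_nat idx)) 0%Q.

Fixpoint cf_nat (fuel a b : nat) : list nat :=
  match fuel with
  | O => []
  | S f =>
      if Nat.eqb b 0 then []
      else Nat.div a b :: (if Nat.eqb (Nat.modulo a b) 0 then [] else cf_nat f b (Nat.modulo a b))
  end.

Definition evenize (l : list nat) : list nat :=
  if Nat.even (length l) then l
  else removelast l ++ [Nat.sub (last l 0%nat) 1; 1%nat].

Definition even_cf (t : Q) : list nat :=
  let a := Z.to_nat (Qnum t) in
  let b := Pos.to_nat (Qden t) in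
  evenize (cf_nat (S b) a b).

Fixpoint qcf (up : bool) (l : list nat) : LFrac :=
  match l with
  | [] => lf_one
  | [a] => if up then qint a else qint_inv a
  | a :: rest =>
      if up then lf_add (qint a) (lf_mul (lf_mon (Z.of_nat a)) (lf_inv (qcf false rest)))
      else lf_add (qint_inv a) (lf_mul (lf_mon (- Z.of_nat a)) (lf_inv (qcf true rest)))
  end.

Definition qdef (t : Q) : LFrac :=
  if Qeq_bool t 1 then lf_one else qcf true (even_cf t).

Definition varkappa (t : Q) (k : nat) : Q := lf_coef (qdef t) k.

(* Main.v *)
Require Import Defs.
From Stdlib Require Import Reals QArith Qreals ZArith.
From Stdlib Require Import Lia Lra List Arith.
From Stdlib Require Import IndefiniteDescription.

Module CF.
Import ListNotations.
Local Open Scope R_scope.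

Lemma cf_fuel : forall f1 f2 a b, (b < f1)%nat -> (b < f2)%nat -> cf_nat f1 a b = cf_nat f2 a b.
Proof.
induction f1 as [|f1 IH]; intros f2 a b h1 h2; [lia|].
destruct f2 as [|f2]; [lia|].
simpl. destruct (Nat.eqb b 0) eqn:Eb; [reflexivity|].
apply Nat.eqb_neq in Eb.
destruct (Nat.eqb (a mod b) 0); [reflexivity|].
f_equal. apply IH; pose proof (Nat.mod_upper_bound a b Eb); lia.
Qed.

Definition Lcf (a b : nat) : list nat := cf_nat (S b) a b.

Lemma Lcf_unfold a b : (0 < b)%nat ->
  Lcf a b = (a / b)%nat :: (if Nat.eqb (a mod b) 0 then [] else Lcf b (a mod b)).
Proof.
intros hb. unfold Lcf at 1. simpl.
destruct (Nat.eqb_spec b 0); [lia|].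
destruct (Nat.eqb (a mod b) 0); [reflexivity|].
f_equal. unfold Lcf. apply cf_fuel; pose proof (Nat.mod_upper_bound a b n); lia.
Qed.

Definition good (l : list nat) := l <> [] /\ Forall (fun x => (1 <= x)%nat) l /\ (2 <= last l 0)%nat.

Lemma Lcf_good : forall b a, (0 < b < a)%nat -> good (Lcf a b).
Proof.
intro b. induction b as [b IH] using (well_founded_induction lt_wf).
intros a hab. rewrite Lcf_unfold by lia.
assert (hq : (1 <= a / b)%nat).
{ apply Nat.div_le_lower_bound; lia. }
destruct (Nat.eqb_spec (a mod b) 0) as [E|E].
- split; [discriminate|split]; [constructor; auto|].
  simpl. pose proof (Nat.div_mod_eq a b) as D. rewrite E in D.
  destruct (Nat.le_gt_cases 2 (a / b)) as [|H]; [auto|].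
  assert (a / b = 1)%nat by lia. rewrite H0 in D. lia.
- pose proof (Nat.mod_upper_bound a b ltac:(lia)) as M.
  destruct (IH (a mod b) M b ltac:(lia)) as [hn [hf hl]].
  split; [discriminate|split]; [constructor; auto|].
  destruct (Lcf b (a mod b)) eqn:El; [contradiction|].
  simpl. simpl in hl. exact hl.
Qed.

Lemma last_app_ne (l r : list nat) d : r <> [] -> last (l ++ r) d = last r d.
Proof.
intros hr. induction l as [|x l IH]; [reflexivity|].
simpl. rewrite IH. destruct (l ++ r) eqn:E; [|reflexivity].
apply app_eq_nil in E. destruct E; contradiction.
Qed.

Lemma evenize_app pre rest : Nat.even (length pre) = true -> good rest ->
  exists rest', evenize (pre ++ rest) = pre ++ rest' /\ Nat.even (length rest') = true /\
    rest' <> [] /\ Forall (fun x => (1 <= x)%nat) rest'.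
Proof.
intros hp [hn [hf hl]].
unfold evenize. rewrite length_app, Nat.even_add, hp.
destruct (Nat.even (length rest)) eqn:Er.
- exists rest. simpl. auto.
- simpl. exists (removelast rest ++ [last rest 0 - 1; 1])%nat.
  rewrite removelast_app by exact hn. rewrite last_app_ne by exact hn.
  rewrite <- app_assoc. split; [reflexivity|].
  split.
  + rewrite length_app. simpl.
    destruct (@exists_last _ rest hn) as [l' [a' E]].
    rewrite E in Er |- *. rewrite removelast_last.
    rewrite length_app in Er. simpl in Er. rewrite Nat.even_add in Er |- *.
    simpl in Er |- *. destruct (Nat.even (length l')); simpl in *; congruence.
  + split.
    * intro H. apply app_eq_nil in H. destruct H as [_ H]. discriminate.
    * apply Forall_app. split.
      -- apply Forall_forall. intros x hx. rewrite Forall_forall in hf. apply hf.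
         destruct (@exists_last _ rest hn) as [l' [a' E]]. rewrite E in hx |- *.
         rewrite removelast_last in hx. apply in_or_app. left. exact hx.
      -- constructor; [lia|]. constructor; [lia|constructor].
Qed.

Lemma Q2R_injZ' z : Q2R (inject_Z z) = IZR z.
Proof. unfold Q2R. simpl. field. Qed.

Lemma floor_ex y : 1 < y -> (forall r, Q2R r <> y) ->
  exists c : nat, (1 <= c)%nat /\ INR c < y < INR c + 1.
Proof.
intros hy hirr. destruct (archimed y) as [h1 h2].
set (z := up y) in *.
assert (hz : (2 <= z)%Z).
{ assert (1 < z)%Z; [apply lt_IZR; lra|lia]. }
exists (Z.to_nat (z - 1)).
assert (E : INR (Z.to_nat (z - 1)) = IZR z - 1).
{ rewrite INR_IZR_INZ, Z2Nat.id by lia. rewrite minus_IZR. reflexivity. }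
rewrite E. split; [lia|]. split; [|lra].
destruct (Rle_lt_or_eq_dec (IZR z - 1) y) as [H|H]; [lra|exact H|].
exfalso. apply (hirr (inject_Z (z - 1))). rewrite Q2R_injZ', minus_IZR. exact H.
Qed.

Lemma irr_step y (c : nat) : INR c < y -> (forall r, Q2R r <> y) ->
  forall r, Q2R r <> / (y - INR c).
Proof.
intros hc hirr r hr.
assert (hp : 0 < y - INR c) by lra.
assert (hr0 : ~ r == 0).
{ intro e. apply Qeq_eqR in e. rewrite hr in e. unfold Q2R in e. simpl in e.
  assert (/ (y - INR c) > 0) by (apply Rinv_0_lt_compat; lra). lra. }
apply (hirr (inject_Z (Z.of_nat c) + / r)%Q).
rewrite Q2R_plus, Q2R_inv by exact hr0. rewrite Q2R_injZ', <- INR_IZR_INZ, hr.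
rewrite Rinv_inv. lra.
Qed.

Lemma cv_between (u : nat -> R) y lo hi : Un_cv u y -> lo < y < hi ->
  exists N, forall n, (N <= n)%nat -> lo < u n < hi.
Proof.
intros hu [h1 h2].
destruct (hu (Rmin (y - lo) (hi - y))) as [N HN].
{ apply Rmin_pos; lra. }
exists N. intros n hn. specialize (HN n hn). unfold R_dist in HN.
apply Rabs_def2 in HN. destruct HN as [H1 H2].
pose proof (Rmin_l (y - lo) (hi - y)). pose proof (Rmin_r (y - lo) (hi - y)). lra.
Qed.

Lemma Un_cv_ev (u v : nat -> R) l : Un_cv u l -> (exists N, forall n, (N <= n)%nat -> v n = u n) ->
  Un_cv v l.
Proof.
intros hu [N HN] eps he. destruct (hu eps he) as [M HM].
exists (Nat.max N M). intros n hn. rewrite HN by lia. apply HM. lia.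
Qed.

Lemma cvinv (u : nat -> R) y c : y - c <> 0 -> Un_cv u y -> Un_cv (fun n => / (u n - c)) (/ (y - c)).
Proof.
intros h hu.
apply (continuity_seq (fun t => / (t - c))); auto.
reg.
Qed.

Lemma digits : forall j y, 1 < y -> (forall r, Q2R r <> y) ->
  exists pre : list nat, length pre = j /\ Forall (fun x => (1 <= x)%nat) pre /\
  forall a b : nat -> nat, (exists N0, forall n, (N0 <= n)%nat -> (0 < b n)%nat) ->
    Un_cv (fun n => INR (a n) / INR (b n)) y ->
    exists N, forall n, (N <= n)%nat -> exists rest, Lcf (a n) (b n) = pre ++ rest /\ good rest.
Proof.
induction j as [|j IH]; intros y hy hirr.
- exists []. split; [reflexivity|]. split; [constructor|].
  intros a b [N0 H0] hcv.
  destruct (cv_between _ _ 1 (y + 1) hcv ltac:(lra)) as [N1 H1].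
  exists (Nat.max N0 N1). intros n hn. exists (Lcf (a n) (b n)). split; [reflexivity|].
  apply Lcf_good. specialize (H0 n ltac:(lia)). specialize (H1 n ltac:(lia)).
  split; [exact H0|]. apply INR_lt.
  assert (hb : 0 < INR (b n)) by (apply lt_0_INR; exact H0).
  destruct H1 as [H1 _].
  apply (Rmult_lt_compat_r (INR (b n))) in H1; [|exact hb].
  unfold Rdiv in H1. rewrite Rmult_assoc, Rinv_l in H1 by lra. lra.
- destruct (floor_ex y hy hirr) as [c [hc1 [hc2 hc3]]].
  set (y' := / (y - INR c)).
  assert (hy' : 1 < y').
  { unfold y'. rewrite <- Rinv_1 at 1. apply Rinv_lt_contravar; lra. }
  destruct (IH y' hy' (irr_step y c hc2 hirr)) as [pre' [hl [hf hP]]].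
  exists (c :: pre'). split; [simpl; lia|]. split; [constructor; auto|].
  intros a b [N0 H0] hcv.
  destruct (cv_between _ _ (INR c) (INR c + 1) hcv ltac:(lra)) as [N1 H1].
  assert (key : forall n, (Nat.max N0 N1 <= n)%nat ->
     (c * b n < a n < (c + 1) * b n)%nat).
  { intros n hn. specialize (H0 n ltac:(lia)). specialize (H1 n ltac:(lia)).
    assert (hb : 0 < INR (b n)) by (apply lt_0_INR; exact H0).
    destruct H1 as [H1 H2].
    apply (Rmult_lt_compat_r (INR (b n))) in H1; [|exact hb].
    apply (Rmult_lt_compat_r (INR (b n))) in H2; [|exact hb].
    unfold Rdiv in H1, H2. rewrite Rmult_assoc, Rinv_l in H1, H2 by lra.
    split; apply INR_lt; rewrite mult_INR; [lra|]. rewrite plus_INR. simpl. lra. }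
  assert (hdiv : forall n, (Nat.max N0 N1 <= n)%nat -> (a n / b n = c)%nat /\ (a n mod b n = a n - c * b n)%nat).
  { intros n hn. specialize (key n hn). split.
    - symmetry. apply (Nat.div_unique _ _ _ (a n - c * b n)); lia.
    - symmetry. apply (Nat.mod_unique _ _ c); lia. }
  destruct (hP b (fun n => a n mod b n)) as [N2 H2].
  + exists (Nat.max N0 N1). intros n hn. rewrite (proj2 (hdiv n hn)). specialize (key n hn). lia.
  + apply (Un_cv_ev (fun n => / (INR (a n) / INR (b n) - INR c))).
    * apply cvinv; [lra|exact hcv].
    * exists (Nat.max N0 N1). intros n hn. rewrite (proj2 (hdiv n hn)).
      specialize (key n hn). specialize (H0 n ltac:(lia)).
      assert (hb : 0 < INR (b n)) by (apply lt_0_INR; exact H0).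
      rewrite minus_INR by lia. rewrite mult_INR.
      assert (0 < INR (a n) - INR c * INR (b n)).
      { assert (INR (c * b n) < INR (a n)) by (apply lt_INR; lia). rewrite mult_INR in H. lra. }
      field. lra.
  + exists (Nat.max (Nat.max N0 N1) N2). intros n hn.
    destruct (H2 n ltac:(lia)) as [rest [hr hg]].
    exists rest. split; [|exact hg].
    assert (hb0 : (0 < b n)%nat) by (apply H0; lia).
    rewrite Lcf_unfold by exact hb0.
    destruct (hdiv n ltac:(lia)) as [hq hm]. rewrite hq.
    specialize (key n ltac:(lia)).
    destruct (Nat.eqb_spec (a n mod b n) 0) as [E|E]; [lia|].
    rewrite hr. reflexivity.
Qed.

End CF.

Module W.
Import CF.
From HB Require Import structures.
From mathcomp Require Import all_boot all_order all_algebra.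
From mathcomp Require Import Rstruct.
From mathcomp Require Import ring zify.
Set Implicit Arguments. Unset Strict Implicit. Unset Printing Implicit Defensive.
Import Order.TTheory GRing.Theory Num.Theory.
Local Open Scope ring_scope.
Delimit Scope Z_scope with zz.
Local Notation "x %:F" := (@tofrac _ x).

Notation F := {fraction {poly R}}.

Fixpoint PZ (l : list Z) : {poly R} :=
  match l with nil => 0 | cons a t => (IZR a)%:P + 'X * PZ t end.

Lemma IZR_add (a b : Z) : IZR (a + b) = IZR a + IZR b :> R.
Proof. exact: plus_IZR. Qed.
Lemma IZR_mul (a b : Z) : IZR (a * b) = IZR a * IZR b :> R.
Proof. exact: mult_IZR. Qed.
Lemma IZR_0 : IZR 0 = 0 :> R. Proof. by []. Qed.
Lemma IZR_1 : IZR 1 = 1 :> R. Proof. by []. Qed.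

Lemma PZ_coef l i : (PZ l)`_i = IZR (List.nth i l Z0).
Proof.
elim: l i => [|a l IH] i /=; first by rewrite coef0; case: i.
rewrite coefD coefC coefXM; case: i => [|i] /=; first by rewrite addr0.
by rewrite add0r IH.
Qed.

Lemma PZ_padd p q : PZ (padd p q) = PZ p + PZ q.
Proof.
elim: p q => [|a p IH] [|b q] /=; rewrite ?add0r ?addr0 //.
rewrite IH IZR_add polyCD; ring.
Qed.

Lemma PZ_pscale c p : PZ (pscale c p) = (IZR c)%:P * PZ p.
Proof.
elim: p => [|a p IH] /=; first by rewrite mulr0.
rewrite /pscale /= -/(pscale c p) IH IZR_mul polyCM; ring.
Qed.

Lemma PZ_pmul p q : PZ (pmul p q) = PZ p * PZ q.
Proof.
elim: p => [|a p IH] /=; first by rewrite mul0r.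
rewrite PZ_padd PZ_pscale /= IH IZR_0 add0r; ring.
Qed.

Lemma PZ_pshift n p : PZ (pshift n p) = 'X^n * PZ p.
Proof.
rewrite /pshift; elim: n => [|n IH] /=; first by rewrite expr0 mul1r.
by rewrite IH IZR_0 add0r exprS mulrA.
Qed.

Lemma PZ_coef0 l : (PZ l)`_0 = IZR (List.nth 0 l Z0).
Proof. exact: PZ_coef. Qed.

Lemma PZ_rep1_coef0 a : (0 < a)%N -> (PZ (List.repeat (Zpos xH) a))`_0 = 1.
Proof. by case: a => // a _; rewrite PZ_coef. Qed.

Definition X : F := ('X)%:F.

Lemma X_neq0 : X != 0.
Proof. by rewrite /X tofrac_eq0 polyX_eq0. Qed.

Definition Xz (z : Z) : F := X ^+ Z.to_nat z / X ^+ Z.to_nat (- z).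

Lemma Xpow_neq0 n : X ^+ n != 0.
Proof. by rewrite expf_neq0 // X_neq0. Qed.

Lemma Xz_neq0 z : Xz z != 0.
Proof. by rewrite /Xz mulf_neq0 ?invr_neq0 ?Xpow_neq0. Qed.

Lemma frac_eq (p q r s : nat) : (p + s = q + r)%N ->
  X ^+ p / X ^+ q = X ^+ r / X ^+ s.
Proof.
move=> h; apply/eqP; rewrite eqr_div ?Xpow_neq0 // -!exprD.
by rewrite h addnC.
Qed.

Lemma XzD a b : Xz (a + b) = Xz a * Xz b.
Proof.
rewrite /Xz mulf_div -!exprD; apply: frac_eq; lia.
Qed.

Lemma Xz_nat n : Xz (Z.of_nat n) = X ^+ n.
Proof. rewrite /Xz Nat2Z.id; have -> : Z.to_nat (- Z.of_nat n) = 0%N by lia.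
by rewrite expr0 invr1 mulr1. Qed.

Lemma Xz0 : Xz 0 = 1.
Proof. by rewrite (Xz_nat 0) expr0. Qed.

Lemma XzN z : Xz (- z) = (Xz z)^-1.
Proof.
apply: (mulfI (Xz_neq0 z)); rewrite -XzD mulfV ?Xz_neq0 //.
by rewrite Z.add_opp_diag_r Xz0.
Qed.


Definition sem (x : LFrac) : F := Xz (sh x) * ((PZ (nu x))%:F / (PZ (de x))%:F).

Lemma tofrac_neq0 (p : {poly R}) : p != 0 -> p%:F != 0 :> F.
Proof. by rewrite tofrac_eq0. Qed.

Lemma fld_add (K: fieldType) (m a b Nx Ny Dx Dy : K): Dx != 0 -> Dy != 0 ->
  m * ((a*(Nx*Dy) + b*(Ny*Dx)) / (Dx*Dy)) = m*a*(Nx/Dx) + m*b*(Ny/Dy).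
Proof. move=> h1 h2. field. by rewrite h1 h2. Qed.

Lemma sem_add x y : PZ (de x) != 0 -> PZ (de y) != 0 ->
  sem (lf_add x y) = sem x + sem y.
Proof.
move=> hx hy; rewrite /sem /lf_add /=.
rewrite PZ_padd !PZ_pshift !PZ_pmul.
set m := Z.min (sh x) (sh y).
have e1 : sh x = (m + Z.of_nat (Z.to_nat (sh x - m)))%zz by rewrite /m; lia.
have e2 : sh y = (m + Z.of_nat (Z.to_nat (sh y - m)))%zz by rewrite /m; lia.
rewrite [in RHS]e1 [in RHS]e2 !XzD !Xz_nat.
have hx' := tofrac_neq0 hx; have hy' := tofrac_neq0 hy.
rewrite !rmorphD !rmorphM /= !rmorphXn /= -/X.
exact: (@fld_add F _ _ _ _ _ _ _ hx' hy').
Qed.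


Lemma fld_mul (K: fieldType) (a b Nx Ny Dx Dy : K):
  a * b * ((Nx*Ny) / (Dx*Dy)) = (a * (Nx/Dx)) * (b * (Ny/Dy)).
Proof. rewrite invfM; ring. Qed.

Lemma sem_mul x y : sem (lf_mul x y) = sem x * sem y.
Proof.
rewrite /sem /lf_mul /= !PZ_pmul XzD !rmorphM /=.
exact: (@fld_mul F).
Qed.

Lemma fld_inv (K: fieldType) (a N D : K): a^-1 * (D / N) = (a * (N / D))^-1.
Proof. rewrite !invfM invrK; ring. Qed.

Lemma sem_inv x : sem (lf_inv x) = (sem x)^-1.
Proof.
rewrite /sem /lf_inv /= XzN. exact: (@fld_inv F).
Qed.


Definition vge (K : Z) (f : F) :=
  exists a b : {poly R}, b`_0 != 0 /\ f = Xz K * (a%:F / b%:F).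

Lemma coef0_neq0 (p : {poly R}) : p`_0 != 0 -> p != 0.
Proof. by apply: contraNneq => ->; rewrite coef0. Qed.

Lemma tofrac_neq0' (p : {poly R}) : p`_0 != 0 -> p%:F != 0 :> F.
Proof. by move/coef0_neq0/tofrac_neq0. Qed.

Lemma fld_vadd (K: fieldType) (x a b c d : K): b != 0 -> d != 0 ->
  x * (a / b) + x * (c / d) = x * ((a * d + c * b) / (b * d)).
Proof. move=> h1 h2. field. by rewrite h1 h2. Qed.

Lemma vge_add K f g : vge K f -> vge K g -> vge K (f + g).
Proof.
move=> [a [b [hb ->]]] [c [d [hd ->]]].
exists (a * d + c * b), (b * d); split; first by rewrite coef0M mulf_neq0.
rewrite rmorphD !rmorphM /=.
exact: (@fld_vadd F _ _ _ _ _ (tofrac_neq0' hb) (tofrac_neq0' hd)).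
Qed.

Lemma vge_opp K f : vge K f -> vge K (- f).
Proof.
move=> [a [b [hb ->]]]; exists (- a), b; split => //.
by rewrite rmorphN /= mulNr mulrN.
Qed.

Lemma vge_sub K f g : vge K f -> vge K g -> vge K (f - g).
Proof. by move=> h1 h2; apply: vge_add => //; apply: vge_opp. Qed.

Lemma fld_vmul (K: fieldType) (x y a b c d : K):
  x * (a / b) * (y * (c / d)) = x * y * ((a * c) / (b * d)).
Proof. rewrite invfM; ring. Qed.

Lemma vge_mul K L f g : vge K f -> vge L g -> vge (K + L) (f * g).
Proof.
move=> [a [b [hb ->]]] [c [d [hd ->]]].
exists (a * c), (b * d); split; first by rewrite coef0M mulf_neq0.
by rewrite XzD !rmorphM /= (@fld_vmul F).
Qed.

Lemma vge_Xz K : vge K (Xz K).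
Proof.
exists 1, 1; split; first by rewrite coef1 oner_neq0.
by rewrite rmorph1 divr1 mulr1.
Qed.

Lemma vge_poly (p : {poly R}) : vge 0 (p%:F).
Proof.
exists p, 1; split; first by rewrite coef1 oner_neq0.
by rewrite rmorph1 divr1 Xz0 mul1r.
Qed.

Lemma vge_le L K f : (L <= K)%zz -> vge K f -> vge L f.
Proof.
move=> hLK [a [b [hb ->]]].
set n := Z.to_nat (K - L).
have -> : K = (L + Z.of_nat n)%zz by rewrite /n; lia.
exists ('X^n * a), b; split => //.
rewrite XzD Xz_nat rmorphM /= rmorphXn /= -/X; ring.
Qed.

Lemma vge_mulX K L f : vge K f -> vge (L + K) (Xz L * f).
Proof. by move=> h; apply: vge_mul => //; apply: vge_Xz. Qed.

Lemma lowzero_mul (p q : {poly R}) M : q`_0 != 0 ->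
  (forall i, (i < M)%N -> (p * q)`_i = 0) -> forall i, (i < M)%N -> p`_i = 0.
Proof.
move=> hq h i; elim: i {-2}i (leqnn i) => [|n IH] i hi hiM.
  rewrite leqn0 in hi; move/eqP: hi => hi; subst i.
  move: (h 0%N hiM); rewrite coef0M; move/eqP; rewrite mulf_eq0 (negbTE hq) orbF.
  by move/eqP.
case: (leqP i n) => hin; first by apply: IH.
have ei : i = n.+1 by apply/eqP; rewrite eqn_leq hi hin.
subst i.
move: (h _ hiM); rewrite coefM big_ord_recr /= subnn.
rewrite big1 ?add0r.
  by move/eqP; rewrite mulf_eq0 (negbTE hq) orbF => /eqP.
move=> j _; rewrite IH ?mul0r //.
  by rewrite -ltnS; exact: ltn_ord.
exact: (ltn_trans (ltn_ord j) hiM).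
Qed.

Lemma poly_vge (p : {poly R}) (L : nat) : vge (Z.of_nat L) (p%:F) ->
  forall i, (i < L)%N -> p`_i = 0.
Proof.
move=> [a [b [hb e]]].
have hb' := tofrac_neq0' hb.
have e2 : (p * b)%:F = ('X^L * a)%:F.
  rewrite !rmorphM /= rmorphXn /= -/X -Xz_nat e.
  by rewrite -mulrA divfK.
move/eqP: e2; rewrite tofrac_eq => /eqP e2.
apply: (lowzero_mul hb) => i hi.
by rewrite e2 coefXnM hi.
Qed.


Definition intSer (f : F) := exists la lb : list Z,
  (PZ la)`_0 = 1 /\ (PZ lb)`_0 = 1 /\ f = (PZ la)%:F / (PZ lb)%:F.

Lemma one_neq0R : (1 : R) != 0. Proof. exact: oner_neq0. Qed.

Lemma intS_vge0 f : intSer f -> vge 0 f.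
Proof.
move=> [la [lb [ha [hb ->]]]]; exists (PZ la), (PZ lb); split.
  by rewrite hb oner_neq0.
by rewrite Xz0 mul1r.
Qed.

Lemma intS_inv f : intSer f -> intSer (f^-1).
Proof.
move=> [la [lb [ha [hb ->]]]]; exists lb, la; split => //; split => //.
by rewrite invf_div.
Qed.

Lemma intS_neq0 f : intSer f -> f != 0.
Proof.
move=> [la [lb [ha [hb ->]]]].
rewrite mulf_neq0 // ?invr_neq0 // tofrac_neq0' // ?ha ?hb oner_neq0 //.
Qed.

Fixpoint geo (q : list Z) (K : nat) : list Z :=
  match K with
  | O => nil
  | S K => padd (cons (Zpos xH) nil) (pmul (pscale (Zneg xH) (cons Z0 q)) (geo q K))
  end.

Lemma PZ_one : PZ (cons (Zpos xH) nil) = 1.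
Proof. by rewrite /= mulr0 addr0. Qed.

Lemma geoS q K : geo q K.+1 =
  padd (cons (Zpos xH) nil) (pmul (pscale (Zneg xH) (cons Z0 q)) (geo q K)).
Proof. by []. Qed.

Lemma PZ_geo q K : (1 + 'X * PZ q) * PZ (geo q K) = 1 - (- ('X * PZ q)) ^+ K.
Proof.
elim: K => [|K IH]; first by rewrite /= mulr0 expr0 subrr.
rewrite geoS PZ_padd PZ_one PZ_pmul PZ_pscale.
have -> : PZ (cons Z0 q) = 'X * PZ q by rewrite /= IZR_0 add0r.
have -> : IZR (Zneg xH) = -1 :> R by [].
rewrite exprS.
have e : (1 + 'X * PZ q) * (1 + (-1)%:P * ('X * PZ q) * PZ (geo q K)) =
   (1 + 'X * PZ q) - ('X * PZ q) * ((1 + 'X * PZ q) * PZ (geo q K)).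
  rewrite polyCN polyC1; ring.
rewrite e IH; ring.
Qed.

Lemma fld_sub (K: fieldType) (a b c : K): b != 0 -> a / b - c = (a - b * c) / b.
Proof. move=> h. field. by rewrite h. Qed.

Lemma geo_id (T : comRingType) (A Q S Xp : T) K : (1 + Xp * Q) * S = 1 - (- (Xp * Q)) ^+ K ->
  A - (1 + Xp * Q) * (A * S) = Xp^+K * (A * (- Q) ^+ K).
Proof.
move=> h.
have -> : (1 + Xp * Q) * (A * S) = A * ((1 + Xp * Q) * S) by ring.
rewrite h -[- (Xp * Q)]mulrN exprMn; ring.
Qed.

Lemma intS_approx f K : intSer f -> exists l, vge (Z.of_nat K) (f - (PZ l)%:F).
Proof.
move=> [la [lb [ha [hb ->]]]].
case: lb hb => [|b0 lb'] hb; first by move: hb; rewrite /= coef0 => /eqP; rewrite eq_sym oner_eq0.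
have hb0 : IZR b0 = 1 :> R by move: hb; rewrite PZ_coef.
have eB : PZ (cons b0 lb') = 1 + 'X * PZ lb' by rewrite /= hb0 polyC1.
exists (pmul la (geo lb' K)).
exists (PZ la * (- PZ lb') ^+ K), (PZ (cons b0 lb')); split.
  by rewrite hb oner_neq0.
have hB : (PZ (cons b0 lb'))%:F != 0 :> F by apply: tofrac_neq0'; rewrite hb oner_neq0.
have ep : PZ la - PZ (cons b0 lb') * PZ (pmul la (geo lb' K)) = 'X^K * (PZ la * (- PZ lb') ^+ K).
  rewrite PZ_pmul eB; apply: geo_id; exact: PZ_geo.
rewrite (@fld_sub F _ _ _ hB) Xz_nat.
have e2 := congr1 (@tofrac _) ep.
rewrite rmorphB !rmorphM rmorphXn /= in e2.
by rewrite e2 -/X rmorphM /= !mulrA.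
Qed.


Definition rep1 (a : nat) : list Z := List.repeat (Zpos xH) a.
Definition Qn (a : nat) : F := (PZ (rep1 a))%:F.

Definition Psi (a b : nat) (W : F) : F :=
  Qn a + X ^+ (a + b) * (W / (1 + X * Qn b * W)).

Lemma fld_psi (K: fieldType) (Qa Qb x A B Xn : K): B != 0 -> B + x * Qb * A != 0 ->
  Qa + Xn * ((A / B) / (1 + x * Qb * (A / B))) = (Qa * (B + x * Qb * A) + Xn * A) / (B + x * Qb * A).
Proof. move=> h1 h2. field. by rewrite h1 h2. Qed.

Lemma fld_psid (K: fieldType) (Xn c W W' : K): 1 + c * W != 0 -> 1 + c * W' != 0 ->
  Xn * (W / (1 + c * W)) - Xn * (W' / (1 + c * W')) = Xn * ((W - W') * (1 + c * W)^-1 * (1 + c * W')^-1).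
Proof. move=> h1 h2. field. by rewrite h1 h2. Qed.

Lemma fld_onep (K: fieldType) (x Qb A B : K): B != 0 ->
  1 + x * Qb * (A / B) = (B + x * Qb * A) / B.
Proof. move=> h1. field. by rewrite h1. Qed.

Lemma coef0_X1M (p : {poly R}) : ('X^1 * p)`_0 = 0.
Proof. by rewrite coefXnM. Qed.

Lemma coef0_XnM n (p : {poly R}) : (0 < n)%N -> ('X^n * p)`_0 = 0.
Proof. by move=> h; rewrite coefXnM h. Qed.

Lemma intS_onep b W : intSer W -> intSer (1 + X * Qn b * W).
Proof.
move=> [la [lb [ha [hb ->]]]].
have hB : (PZ lb)%:F != 0 :> F by apply: tofrac_neq0'; rewrite hb oner_neq0.
exists (padd lb (pshift 1 (pmul (rep1 b) la))), lb; split; last split => //.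
  by rewrite PZ_padd PZ_pshift coefD coef0_X1M addr0.
rewrite (@fld_onep F _ _ _ _ hB) PZ_padd PZ_pshift PZ_pmul.
by rewrite rmorphD !rmorphM /= rmorphXn /= expr1 -/X mulrA.
Qed.

Lemma intS_Psi a b W : (0 < a)%N -> intSer W -> intSer (Psi a b W).
Proof.
move=> ha0 hW; have hu := intS_onep b hW.
move: hW => [la [lb [ha [hb eW]]]].
have hB : (PZ lb)%:F != 0 :> F by apply: tofrac_neq0'; rewrite hb oner_neq0.
set den := padd lb (pshift 1 (pmul (rep1 b) la)).
have hd0 : (PZ den)`_0 = 1 by rewrite PZ_padd PZ_pshift coefD coef0_X1M addr0.
have eden : (PZ den)%:F = (PZ lb)%:F + X * Qn b * (PZ la)%:F.
  by rewrite /den PZ_padd PZ_pshift PZ_pmul rmorphD !rmorphM /= rmorphXn /= expr1 -/X mulrA.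
have hD : (PZ lb)%:F + X * Qn b * (PZ la)%:F != 0.
  by rewrite -eden; apply: tofrac_neq0'; rewrite hd0 oner_neq0.
exists (padd (pmul (rep1 a) den) (pshift (a + b) la)), den; split; last split => //.
  rewrite PZ_padd PZ_pshift PZ_pmul coefD coef0_XnM ?addr0; last by rewrite addn_gt0 ha0.
  by rewrite coef0M hd0 mulr1 /rep1 PZ_rep1_coef0.
rewrite /Psi eW (@fld_psi F _ _ _ _ _ _ hB hD) -eden.
by rewrite PZ_padd PZ_pshift PZ_pmul rmorphD !rmorphM /= rmorphXn /= -/X.
Qed.

Lemma vge_eq K L f : K = L -> vge K f -> vge L f.
Proof. by move=> ->. Qed.

Lemma vge_Psi a b W W' K : intSer W -> intSer W' -> vge K (W - W') ->
  vge (K + Z.of_nat (a + b)) (Psi a b W - Psi a b W').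
Proof.
move=> hW hW' hK.
have hu := intS_onep b hW; have hu' := intS_onep b hW'.
rewrite /Psi opprD addrACA subrr add0r.
rewrite (@fld_psid F _ _ _ _ (intS_neq0 hu) (intS_neq0 hu')).
rewrite -Xz_nat; apply: (@vge_eq (Z.of_nat (a + b) + (K + 0 + 0))%zz); first lia.
apply: vge_mul; first exact: vge_Xz.
apply: vge_mul; last by apply: intS_vge0; apply: intS_inv.
apply: vge_mul => //; by apply: intS_vge0; apply: intS_inv.
Qed.


Definition wf (x : LFrac) := PZ (nu x) != 0 /\ PZ (de x) != 0.

Lemma nu_neq0 x : PZ (de x) != 0 -> sem x != 0 -> PZ (nu x) != 0.
Proof.
move=> hd; apply: contraNneq => hn; rewrite /sem hn rmorph0 /= mul0r mulr0 //.
Qed.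

Lemma PZ_one' : PZ (cons (Zpos xH) nil) = 1.
Proof. exact: PZ_one. Qed.

Lemma sem_mon k : sem (lf_mon k) = Xz k.
Proof. by rewrite /sem /lf_mon; cbn [nu de sh]; rewrite PZ_one' rmorph1 divr1 mulr1. Qed.

Lemma sem_qint a : sem (qint a) = Qn a.
Proof. by rewrite /sem /qint; cbn [nu de sh]; rewrite PZ_one' rmorph1 divr1 Xz0 mul1r. Qed.

Lemma sem_qint_inv a : sem (qint_inv a) = Xz (- (Z.of_nat a - 1)) * Qn a.
Proof. by rewrite /sem /qint_inv; cbn [nu de sh]; rewrite PZ_one' rmorph1 divr1. Qed.

Lemma Qn_coef0 a : (0 < a)%N -> (PZ (rep1 a))`_0 = 1.
Proof. exact: PZ_rep1_coef0. Qed.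

Lemma Qn_neq0 a : (0 < a)%N -> Qn a != 0.
Proof. by move=> h; apply: tofrac_neq0'; rewrite Qn_coef0 // oner_neq0. Qed.

Lemma rep1_neq0 a : (0 < a)%N -> PZ (rep1 a) != 0.
Proof. by move=> h; apply: coef0_neq0; rewrite Qn_coef0 // oner_neq0. Qed.

Lemma qcf_base a b : qcf true (cons a (cons b nil)) =
  lf_add (qint a) (lf_mul (lf_mon (Z.of_nat a)) (lf_inv (qint_inv b))).
Proof. by []. Qed.

Lemma qcf_cons2 a b c r : qcf true (cons a (cons b (cons c r))) =
  lf_add (qint a) (lf_mul (lf_mon (Z.of_nat a)) (lf_inv
    (lf_add (qint_inv b) (lf_mul (lf_mon (- Z.of_nat b)%zz) (lf_inv (qcf true (cons c r))))))).
Proof. by []. Qed.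

Lemma Xz_sub1 b : (0 < b)%N -> Xz (- (Z.of_nat b - 1)) = (X ^+ b.-1)^-1.
Proof.
move=> hb; have -> : (- (Z.of_nat b - 1))%zz = (- Z.of_nat b.-1)%zz by lia.
by rewrite XzN Xz_nat.
Qed.

Lemma fld_base (K : fieldType) (xa xb Qa Qb : K) : xb != 0 -> Qb != 0 ->
  Qa + xa * (xb^-1 * Qb)^-1 = (Qa * Qb + xa * xb) / Qb.
Proof. move=> h1 h2. field. by rewrite h1 h2. Qed.

Lemma qcf_base_prop a b : (0 < a)%N -> (0 < b)%N ->
  wf (qcf true (cons a (cons b nil))) /\ intSer (sem (qcf true (cons a (cons b nil)))).
Proof.
move=> ha hb.
have hdi : PZ (de (qint_inv b)) != 0 by rewrite /qint_inv /qint; cbn [nu de sh]; rewrite PZ_one' oner_neq0.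
have hni : PZ (nu (qint_inv b)) != 0 by exact: rep1_neq0.
have hd1 : PZ (de (lf_mul (lf_mon (Z.of_nat a)) (lf_inv (qint_inv b)))) != 0.
  by rewrite /lf_mul /lf_inv /lf_mon /qint_inv; cbn [nu de sh]; rewrite PZ_pmul PZ_one' mul1r; exact: rep1_neq0.
have hd0 : PZ (de (qint a)) != 0 by rewrite /qint_inv /qint; cbn [nu de sh]; rewrite PZ_one' oner_neq0.
have esem : sem (qcf true (cons a (cons b nil))) =
    (PZ (padd (pmul (rep1 a) (rep1 b)) (pshift (a + b.-1) (cons (Zpos xH) nil))))%:F
    / (PZ (rep1 b))%:F.
  rewrite qcf_base sem_add // sem_mul sem_inv sem_mon sem_qint sem_qint_inv Xz_sub1 //.
  rewrite Xz_nat (@fld_base F _ _ _ _ (Xpow_neq0 _) (Qn_neq0 hb)).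
  rewrite PZ_padd PZ_pmul PZ_pshift PZ_one' mulr1 rmorphD rmorphM rmorphXn /= -/X.
  by rewrite exprD.
have hI : intSer (sem (qcf true (cons a (cons b nil)))).
  exists (padd (pmul (rep1 a) (rep1 b)) (pshift (a + b.-1) (cons (Zpos xH) nil))), (rep1 b).
  split; last split => //; last exact: Qn_coef0.
  rewrite PZ_padd PZ_pshift PZ_pmul coefD coef0_XnM ?addn_gt0 ?ha // addr0.
  by rewrite coef0M !Qn_coef0 // mulr1.
split => //; split; last by rewrite qcf_base /lf_add /lf_mul /lf_inv /lf_mon /qint_inv /qint; cbn [nu de sh]; rewrite !PZ_pmul !PZ_one' !mul1r; exact: rep1_neq0.
apply: nu_neq0; last exact: intS_neq0.
by rewrite qcf_base /lf_add /lf_mul /lf_inv /lf_mon /qint_inv /qint; cbn [nu de sh]; rewrite !PZ_pmul !PZ_one' !mul1r; exact: rep1_neq0.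
Qed.

Lemma de_add x y : PZ (de (lf_add x y)) = PZ (de x) * PZ (de y).
Proof. exact: PZ_pmul. Qed.
Lemma de_mul x y : PZ (de (lf_mul x y)) = PZ (de x) * PZ (de y).
Proof. exact: PZ_pmul. Qed.
Lemma de_inv x : de (lf_inv x) = nu x. Proof. by []. Qed.
Lemma nu_inv x : nu (lf_inv x) = de x. Proof. by []. Qed.
Lemma de_mon k : PZ (de (lf_mon k)) = 1. Proof. exact: PZ_one'. Qed.
Lemma de_qint a : PZ (de (qint a)) = 1. Proof. exact: PZ_one'. Qed.
Lemma de_qint_inv a : PZ (de (qint_inv a)) = 1. Proof. exact: PZ_one'. Qed.

Lemma fld_Y (K : fieldType) (x xb1 Qb W : K) : x != 0 -> xb1 != 0 -> W != 0 ->
  xb1^-1 * Qb + (x * xb1)^-1 * W^-1 = (1 + x * Qb * W) / (x * xb1 * W).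
Proof. move=> h1 h2 h3. field. by rewrite h1 h2 h3. Qed.

Lemma fld_top (K : fieldType) (xa x xb1 Qa Qb W : K) : x != 0 -> xb1 != 0 -> W != 0 ->
  1 + x * Qb * W != 0 ->
  Qa + xa * ((1 + x * Qb * W) / (x * xb1 * W))^-1 = Qa + xa * (x * xb1) * (W / (1 + x * Qb * W)).
Proof. move=> h1 h2 h3 h4. field. by rewrite h1 h2 h3 h4. Qed.

Lemma qcf_step a b c r : (0 < a)%N -> (0 < b)%N ->
  wf (qcf true (cons c r)) -> intSer (sem (qcf true (cons c r))) ->
  [/\ sem (qcf true (cons a (cons b (cons c r)))) = Psi a b (sem (qcf true (cons c r))),
      wf (qcf true (cons a (cons b (cons c r)))) &
      intSer (sem (qcf true (cons a (cons b (cons c r)))))].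
Proof.
move=> ha hb [hnT hdT] hI.
set T := qcf true (cons c r).
set W := sem T.
have hW : W != 0 by exact: intS_neq0.
set Y := lf_add (qint_inv b) (lf_mul (lf_mon (- Z.of_nat b)%zz) (lf_inv T)).
have hdY : PZ (de Y) != 0.
  by rewrite de_add de_qint_inv de_mul de_mon de_inv !mul1r.
have hu := intS_onep b hI.
have hu0 := intS_neq0 hu.
have eb : b = (b.-1).+1 by rewrite prednK.
have esY : sem Y = (1 + X * Qn b * W) / (X * X ^+ b.-1 * W).
  rewrite sem_add; first last.
  - by rewrite de_mul de_mon de_inv mul1r.
  - by rewrite de_qint_inv oner_neq0.
  rewrite sem_mul sem_inv sem_mon sem_qint_inv Xz_sub1 // XzN Xz_nat [in X ^+ b]eb exprS -/W.
  exact: (@fld_Y F X (X ^+ b.-1) (Qn b) W X_neq0 (Xpow_neq0 _) hW).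
have hsY : sem Y != 0.
  have h1 : X * X ^+ b.-1 * W != 0.
    exact: (mulf_neq0 (mulf_neq0 X_neq0 (Xpow_neq0 _)) hW).
  rewrite esY; exact: (mulf_neq0 hu0 (invr_neq0 h1)).
have hnY := nu_neq0 hdY hsY.
have eS : sem (qcf true (cons a (cons b (cons c r)))) = Psi a b W.
  rewrite qcf_cons2 -/T -/Y sem_add; first last.
  - by rewrite de_mul de_mon de_inv mul1r.
  - by rewrite de_qint oner_neq0.
  rewrite sem_mul sem_inv sem_mon sem_qint esY Xz_nat.
  rewrite (@fld_top F (X ^+ a) X (X ^+ b.-1) (Qn a) (Qn b) W X_neq0 (Xpow_neq0 _) hW hu0).
  by rewrite /Psi exprD -exprS -eb.
have hIP := intS_Psi b ha hI.
split; [exact: eS | | by rewrite eS].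
split.
  apply: nu_neq0; last by rewrite eS; exact: intS_neq0 hIP.
  by rewrite qcf_cons2 -/T -/Y de_add de_qint de_mul de_mon de_inv !mul1r.
by rewrite qcf_cons2 -/T -/Y de_add de_qint de_mul de_mon de_inv !mul1r.
Qed.


Definition posl (l : list nat) := all (fun x => 0 < x)%N l.
Definition evenpos (t : list nat) := (exists m, size t = (m.+1).*2) /\ posl t.

Lemma qcf_even_prop n l : size l = (n.+1).*2 -> posl l ->
  wf (qcf true l) /\ intSer (sem (qcf true l)).
Proof.
elim: n l => [|n IH] [|a [|b l]] //=.
  case: l => // _; rewrite /posl /= andbT => /andP [ha hb].
  exact: qcf_base_prop.
move=> /eqP; rewrite !eqSS => /eqP hs /andP [ha /andP [hb hl]].
case: l hs hl => [|c r] hs hl //.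
have [hw hi] := IH (cons c r) hs hl.
by case: (qcf_step ha hb hw hi).
Qed.

Lemma evenpos_prop t : evenpos t -> wf (qcf true t) /\ intSer (sem (qcf true t)).
Proof. by move=> [[m hm] hp]; exact: (qcf_even_prop hm hp). Qed.

Lemma qcf_prefix J pre : size pre = J.*2 -> posl pre -> forall t t', evenpos t -> evenpos t' ->
  vge (Z.of_nat J) (sem (qcf true (pre ++ t)) - sem (qcf true (pre ++ t'))).
Proof.
elim: J pre => [|J IH] [|a [|b pre]] //= hs hp t t' ht ht'.
  apply: vge_sub; apply: intS_vge0.
    by case: (evenpos_prop ht).
  by case: (evenpos_prop ht').
move: hs => /eqP; rewrite !eqSS => /eqP hs.
move: hp => /andP [ha /andP [hb hp]].
have key : forall u, evenpos u -> exists c r, pre ++ u = cons c r /\ wf (qcf true (cons c r))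
   /\ intSer (sem (qcf true (cons c r))).
  move=> u hu; case e : (pre ++ u) => [|c r].
    by move: hu => [[m hm] _]; move: e => /(congr1 size); rewrite size_cat hm addnS.
  exists c, r; split => //; rewrite -e.
  have [hw hi] : wf (qcf true (pre ++ u)) /\ intSer (sem (qcf true (pre ++ u))).
    move: hu => [[m hm] hpu]; apply: (@qcf_even_prop (J + m)).
      by rewrite size_cat hs hm addnS doubleS doubleD addnS.
    by rewrite /posl all_cat; apply/andP; split; [exact: hp | exact: hpu].
  by [].
have [c [r [e [hw hi]]]] := key t ht.
have [c' [r' [e' [hw' hi']]]] := key t' ht'.
rewrite e e'.
have [s1 _ _] := qcf_step ha hb hw hi.
have [s2 _ _] := qcf_step ha hb hw' hi'.
rewrite s1 s2.
apply: (@vge_le _ (Z.of_nat J + Z.of_nat (a + b))%zz); first lia.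
apply: vge_Psi => //.
rewrite -e -e'; exact: IH.
Qed.


Notation q0 := (Qmake Z0 xH).

Lemma Q2R_fold (f : nat -> Q) (l : list nat) :
  Q2R (List.fold_right Qplus q0 (List.map f l)) = \sum_(i <- l) Q2R (f i).
Proof.
elim: l => [|a l IH] /=; first by rewrite big_nil /Q2R /= Rmult_0_l.
by rewrite Q2R_plus big_cons IH.
Qed.

Lemma seq_iota a n : List.seq a n = iota a n.
Proof. by elim: n a => [|n IH] a //=; rewrite IH. Qed.

Lemma nth_app1 (l : list Q) x j : (j < length l)%N -> List.nth j (l ++ x) q0 = List.nth j l q0.
Proof. by move=> h; rewrite List.app_nth1 //; exact/ssrnat.ltP. Qed.

Lemma nth_app2 (l : list Q) x : List.nth (length l) (l ++ cons x nil) q0 = x.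
Proof. by rewrite List.app_nth2 // Nat.sub_diag. Qed.

Lemma length_ser P D n : length (ser_upto P D n) = n.+1.
Proof.
elim: n => [|n IH] //=.
by rewrite List.length_app IH /= Nat.add_1_r.
Qed.

Lemma Q2R_neq0 (q : Q) : ~ Qeq q q0 -> Q2R q != 0.
Proof.
move=> h; apply/eqP => e; apply: h; apply: eqR_Qeq.
by rewrite e /Q2R /= Rmult_0_l.
Qed.

Lemma sum_iota1 (G : nat -> R) n : \sum_(i <- iota 1 n) G i = \sum_(i < n) G i.+1.
Proof.
rewrite -(big_mkord xpredT (fun i => G i.+1)) /index_iota subn0.
rewrite -[iota 1 n]/(iota (1 + 0) n) iotaDl big_map.
by apply: eq_bigr => i _; rewrite add1n.
Qed.

Lemma ser_spec (P D : list Q) n : ~ Qeq (List.nth 0 D q0) q0 ->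
  forall t, (t <= n)%N ->
  \sum_(i < t.+1) Q2R (List.nth i D q0) * Q2R (List.nth (t - i) (ser_upto P D n) q0)
    = Q2R (List.nth t P q0).
Proof.
move=> hD0; have hd0 := Q2R_neq0 hD0.
elim: n => [|n IH] t ht.
  rewrite leqn0 in ht; move/eqP: ht => ->.
  rewrite big_ord1 /= Q2R_div // RdivE mulrC divfK //.
set cs := ser_upto P D n.
have hl : length cs = n.+1 by exact: length_ser.
have eS : ser_upto P D n.+1 = cs ++ cons
   (Qdiv (Qminus (List.nth n.+1 P q0)
      (List.fold_right Qplus q0 (List.map (fun i => Qmult (List.nth i D q0) (List.nth (n.+1 - i) cs q0))
        (List.seq 1 n.+1)))) (List.nth 0 D q0)) nil by [].
rewrite eS.
case: (leqP t n) => htn.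
  rewrite -(IH t htn); apply: eq_bigr => i _; rewrite nth_app1 // hl ltnS.
  by apply: leq_trans (leq_subr _ _) htn.
have et : t = n.+1 by apply/eqP; rewrite eqn_leq ht htn.
subst t.
rewrite big_ord_recl subn0 -hl nth_app2 hl.
rewrite Q2R_div // Q2R_minus Q2R_fold seq_iota RdivE RminusE.
set S := \sum_(i <- iota 1 n.+1) _.
have eS2 : S = \sum_(i < n.+1) Q2R (List.nth (bump 0 i) D q0) *
      Q2R (List.nth (n.+1 - bump 0 i) (cs ++ cons (Qdiv (Qminus (List.nth n.+1 P q0)
      (List.fold_right Qplus q0 (List.map (fun i => Qmult (List.nth i D q0) (List.nth (n.+1 - i) cs q0))
        (List.seq 1 n.+1)))) (List.nth 0 D q0)) nil) q0).
  rewrite /S sum_iota1.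
  apply: eq_bigr => i _; rewrite Q2R_mult; congr (_ * _).
  rewrite /bump /= add1n subSS nth_app1 // hl ltnS; exact: leq_subr.
rewrite -eS2; set p := Q2R (List.nth n.+1 P q0).
set d := Q2R (List.nth 0 D q0).
rewrite mulrC divfK //; ring.
Qed.


Lemma Q2R_injZ z : Q2R (inject_Z z) = IZR z.
Proof. by rewrite /Q2R /= Rinv_1 Rmult_1_r. Qed.

Lemma nth_map_injZ l i : Q2R (List.nth i (List.map inject_Z l) q0) = (PZ l)`_i.
Proof.
rewrite PZ_coef -Q2R_injZ; congr Q2R.
by rewrite -(List.map_nth inject_Z l Z0 i).
Qed.

Lemma PZ_lz l : PZ l = 'X^(lz l) * PZ (List.skipn (lz l) l).
Proof.
elim: l => [|z t IH] /=; first by rewrite mulr0.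
case: (Z.eqb_spec z Z0) => hz /=.
  by rewrite hz IZR_0 polyC0 add0r {1}IH exprS mulrA.
by rewrite expr0 mul1r.
Qed.

Lemma lz_coef0 l : PZ l != 0 -> (PZ (List.skipn (lz l) l))`_0 != 0.
Proof.
elim: l => [|z t IH]; first by rewrite /= eqxx.
rewrite [lz _]/=; case: (Z.eqb_spec z Z0) => hz.
  rewrite /= hz IZR_0 polyC0 add0r => h; apply: IH.
  by apply: contraNneq h => ->; rewrite mulr0.
move=> _; rewrite PZ_coef /=; apply/eqP => e; apply: hz; exact: eq_IZR.
Qed.

Lemma ser_poly (lp ld : list Z) n : (PZ ld)`_0 != 0 ->
  forall t, (t <= n)%N ->
  (PZ ld * \poly_(i < n.+1) Q2R (List.nth i (ser_upto (List.map inject_Z lp) (List.map inject_Z ld) n) q0))`_t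
  = (PZ lp)`_t.
Proof.
move=> hd0.
have hQ : ~ Qeq (List.nth 0 (List.map inject_Z ld) q0) q0.
  move=> e; move: hd0; rewrite -nth_map_injZ (Qeq_eqR _ _ e) /Q2R /= Rmult_0_l eqxx //.
move=> t ht; rewrite -nth_map_injZ -(ser_spec (List.map inject_Z lp) hQ ht) coefM.
apply: eq_bigr => i _; rewrite nth_map_injZ coef_poly.
by rewrite ltnS (leq_trans (leq_subr _ _) ht).
Qed.

Lemma low_div (p : {poly R}) n : (forall i, (i < n)%N -> p`_i = 0) -> p = 'X^n * drop_poly n p.
Proof.
move=> h; rewrite -{1}(poly_take_drop n p).
have -> : take_poly n p = 0.
  by apply/polyP => i; rewrite coef_take_poly coef0; case: ifP => // /h.
by rewrite add0r mulrC.
Qed.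

Lemma ser_vge (lp ld : list Z) n : (PZ ld)`_0 != 0 ->
  vge (Z.of_nat n.+1) ((PZ lp)%:F / (PZ ld)%:F -
    (\poly_(i < n.+1) Q2R (List.nth i (ser_upto (List.map inject_Z lp) (List.map inject_Z ld) n) q0))%:F).
Proof.
move=> hd0; set C := \poly_(i < n.+1) _.
have hB := tofrac_neq0' hd0.
set r := drop_poly n.+1 (PZ lp - PZ ld * C).
have e : PZ lp - PZ ld * C = 'X^(n.+1) * r.
  apply: low_div => i hi; rewrite coefB ser_poly ?subrr //.
exists r, (PZ ld); split => //.
rewrite Xz_nat (@fld_sub F _ _ _ hB) -rmorphM -rmorphB /= e rmorphM rmorphXn /= -/X.
by rewrite mulrA.
Qed.

Lemma fld_sem (K : fieldType) (s xj N D : K) : xj != 0 ->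
  s * (N / (xj * D)) = (s * xj^-1) * (N / D).
Proof. move=> h; rewrite invfM; ring. Qed.

Lemma vge_frac (a b : {poly R}) : b`_0 != 0 -> vge 0 (a%:F / b%:F).
Proof. by move=> h; exists a, b; split => //; rewrite Xz0 mul1r. Qed.

Lemma L2 x (P : {poly R}) K k : PZ (de x) != 0 -> vge K (sem x - P%:F) ->
  (Z.of_nat k < K)%zz -> Q2R (lf_coef x k) = P`_k.
Proof.
move=> hde hv hk.
set j := lz (de x).
set ld := List.skipn j (de x).
set lp := nu x.
have hd0 : (PZ ld)`_0 != 0 by exact: lz_coef0.
set m := (sh x - Z.of_nat j)%zz.
have hsem : sem x = Xz m * ((PZ lp)%:F / (PZ ld)%:F).
  rewrite /sem [PZ (de x)]PZ_lz -/j -/ld rmorphM /= rmorphXn /= -/X.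
  rewrite (@fld_sem F _ _ _ _ (Xpow_neq0 j)) /m.
  have -> : (sh x - Z.of_nat j)%zz = (sh x + - Z.of_nat j)%zz by lia.
  by rewrite XzD XzN Xz_nat.
have hK : vge (Z.of_nat k.+1) (sem x - P%:F) by apply: (vge_le _ hv); lia.
rewrite /lf_coef -/j -/ld -/lp.
case: (Z.ltb_spec (Z.of_nat k - sh x + Z.of_nat j) 0) => hidx.
  have hsx : vge (Z.of_nat k.+1) (sem x).
    apply: (@vge_le _ (m + 0)%zz); first by rewrite /m; lia.
    by rewrite hsem; apply: vge_mul; [exact: vge_Xz | exact: vge_frac].
  have hP : vge (Z.of_nat k.+1) (P%:F).
    by rewrite -[P%:F](subKr (sem x)); apply: vge_sub.
  rewrite (poly_vge hP (leqnn k.+1)) /Q2R /=; exact: Rmult_0_l.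
set n := Z.to_nat (Z.of_nat k - sh x + Z.of_nat j).
have hnk : (Z.of_nat n = Z.of_nat k - m)%zz by rewrite /n /m; lia.
have hC := ser_vge lp n hd0.
set C := \poly_(i < n.+1) _ in hC.
have hsub : vge (Z.of_nat k.+1) (Xz m * C%:F - P%:F).
  have -> : Xz m * C%:F - P%:F = (sem x - P%:F) - Xz m * ((PZ lp)%:F / (PZ ld)%:F - C%:F).
    rewrite hsem; ring.
  apply: vge_sub => //.
  apply: (@vge_le _ (m + Z.of_nat n.+1)%zz); first lia.
  by apply: vge_mul => //; exact: vge_Xz.
have eC : Q2R (List.nth n (ser_upto (List.map inject_Z lp) (List.map inject_Z ld) n) q0) = C`_n.
  by rewrite /C coef_poly ltnSn.
rewrite eC.
case: (Z.leb_spec 0 m) => hm.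
  set mm := Z.to_nat m.
  have em : Xz m = ('X^mm)%:F by rewrite rmorphXn /= -/X -Xz_nat /mm Z2Nat.id.
  have hp : vge (Z.of_nat k.+1) (('X^mm * C - P)%:F) by rewrite rmorphB rmorphM /= -em.
  have := poly_vge hp (leqnn k.+1); rewrite coefB coefXnM.
  have -> : (k < mm)%N = false by apply/negbTE; rewrite -leqNgt; apply/ssrnat.leP; rewrite /mm; lia.
  have -> : (k - mm)%N = n by apply/eqP; rewrite -(eqn_add2r mm) subnK; [apply/eqP; rewrite /n /mm; lia | apply/ssrnat.leP; rewrite /mm; lia].
  by move/eqP; rewrite subr_eq0 => /eqP.
set mm := Z.to_nat (- m).
have em : Xz (- m) = ('X^mm)%:F by rewrite rmorphXn /= -/X -Xz_nat /mm Z2Nat.id //; lia.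
have hp : vge (Z.of_nat n.+1) ((C - 'X^mm * P)%:F).
  have -> : (C - 'X^mm * P)%:F = Xz (- m) * (Xz m * C%:F - P%:F).
    rewrite mulrBr mulrA -XzD Z.add_opp_diag_l Xz0 mul1r em rmorphB rmorphM //.
  apply: (@vge_le _ (- m + Z.of_nat k.+1)%zz); first lia.
  by apply: vge_mul => //; exact: vge_Xz.
have := poly_vge hp (leqnn n.+1); rewrite coefB coefXnM.
have -> : (n < mm)%N = false by apply/negbTE; rewrite -leqNgt; apply/ssrnat.leP; rewrite /mm; lia.
have -> : (n - mm)%N = k by apply/eqP; rewrite -(eqn_add2r mm) subnK; [apply/eqP; rewrite /n /mm; lia | apply/ssrnat.leP; rewrite /mm; lia].
by move/eqP; rewrite subr_eq0 => /eqP.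
Qed.


Lemma cat_app (l r : list nat) : l ++ r = List.app l r.
Proof. by elim: l => //= a l ->. Qed.

Lemma size_length (l : list nat) : size l = List.length l.
Proof. by elim: l => //= a l ->. Qed.

Lemma Forall_posl (l : list nat) : List.Forall (fun x => le 1 x) l -> posl l.
Proof. elim => //= x t h _ IH; rewrite /posl /=; apply/andP; split; [exact/ssrnat.leP | exact: IH]. Qed.

Lemma evenpos_of (t : list nat) : Nat.even (List.length t) = true -> t <> nil ->
  List.Forall (fun x => le 1 x) t -> evenpos t.
Proof.
move=> he hn hf; split; last exact: Forall_posl.
have [m hm] : exists m, List.length t = Nat.mul 2 m by apply/Nat.even_spec.
case: m hm => [|m] hm.
  by case: t hn he hm hf.
exists m; rewrite size_length hm; lia.
Qed.

Lemma pre_prop J pre t : size pre = J.*2 -> posl pre -> evenpos t ->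
  wf (qcf true (pre ++ t)) /\ intSer (sem (qcf true (pre ++ t))).
Proof.
move=> hs hp [[m hm] hpt]; apply: (@qcf_even_prop (J + m)).
  by rewrite size_cat hs hm addnS doubleS doubleD addnS.
by rewrite /posl all_cat; apply/andP; split; [exact: hp | exact: hpt].
Qed.

Lemma key_W (pre : list nat) (k : nat) : List.length pre = Nat.mul 2 (S k) ->
  List.Forall (fun x => le 1 x) pre ->
  exists z : Z, forall rest, Nat.even (List.length rest) = true -> rest <> nil ->
    List.Forall (fun x => le 1 x) rest ->
    Qeq (lf_coef (qcf true (List.app pre rest)) k) (inject_Z z).
Proof.
move=> hlen hf.
have hs : size pre = (k.+1).*2 by rewrite size_length hlen; lia.
have hp := Forall_posl hf.
set t0 := cons 1%N (cons 1%N nil).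
have ht0 : evenpos t0 by split; [exists 0%N | ].
have [_ hI0] := pre_prop hs hp ht0.
have [l hl] := intS_approx k.+1 hI0.
exists (List.nth k l Z0) => rest he hn hfr.
have hr := evenpos_of he hn hfr.
have [[_ hde] _] := pre_prop hs hp hr.
have hv := qcf_prefix hs hp hr ht0.
have hv2 : vge (Z.of_nat k.+1) (sem (qcf true (pre ++ rest)) - (PZ l)%:F).
  have -> : sem (qcf true (pre ++ rest)) - (PZ l)%:F =
    (sem (qcf true (pre ++ rest)) - sem (qcf true (pre ++ t0))) +
    (sem (qcf true (pre ++ t0)) - (PZ l)%:F) by ring.
  exact: vge_add.
have := L2 hde hv2 (ltac:(lia) : (Z.of_nat k < Z.of_nat k.+1)%zz).
rewrite PZ_coef -Q2R_injZ cat_app => e.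
exact: eqR_Qeq.
Qed.

End W.

Module G.
Import CF W.

Lemma qnum_pos (q : Q) : (1 <= q)%Q -> (0 < Qnum q)%Z.
Proof. unfold Qle. simpl. intros h. pose proof (Pos2Z.is_pos (Qden q)). lia. Qed.

Lemma Q2R_ab (q : Q) : (1 <= q)%Q ->
  Q2R q = (INR (Z.to_nat (Qnum q)) / INR (Pos.to_nat (Qden q)))%R.
Proof.
intros h. pose proof (qnum_pos q h).
unfold Q2R. rewrite !INR_IZR_INZ, Z2Nat.id by lia. rewrite positive_nat_Z. reflexivity.
Qed.

Lemma main_k x : (1 < x)%R -> (forall r : Q, Q2R r <> x) -> forall k : nat,
  exists z : Z, forall xs : nat -> Q, (forall n, (1 <= xs n)%Q) ->
    Un_cv (fun n => Q2R (xs n)) x ->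
    exists N : nat, forall n : nat, (N <= n)%nat -> (varkappa (xs n) k == inject_Z z)%Q.
Proof.
intros hx hirr k.
destruct (digits (2 * S k) x hx hirr) as [pre [hl [hf hP]]].
destruct (@key_W pre k hl hf) as [z hz].
exists z. intros xs h1 hcv.
set (a := fun n => Z.to_nat (Qnum (xs n))).
set (b := fun n => Pos.to_nat (Qden (xs n))).
destruct (hP a b) as [N1 H1].
- exists 0%nat. intros n _. unfold b. lia.
- apply (Un_cv_ev (fun n => Q2R (xs n))); [exact hcv|].
  exists 0%nat. intros n _. unfold a, b. symmetry. apply Q2R_ab. apply h1.
- destruct (cv_between _ _ 1 (x + 1) hcv ltac:(lra)) as [N2 H2].
  exists (Nat.max N1 N2). intros n hn.
  destruct (H1 n ltac:(lia)) as [rest [hr hg]].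
  assert (hev : Nat.even (length pre) = true).
  { rewrite hl. apply Nat.even_spec. exists (S k). reflexivity. }
  destruct (evenize_app pre rest hev hg) as [rest' [he [hre [hrn hrf]]]].
  unfold varkappa, qdef.
  assert (hq : Qeq_bool (xs n) 1 = false).
  { destruct (Qeq_bool (xs n) 1) eqn:E; [|reflexivity].
    apply Qeq_bool_eq in E. apply Qeq_eqR in E. specialize (H2 n ltac:(lia)).
    rewrite E in H2. unfold Q2R in H2. simpl in H2. lra. }
  rewrite hq.
  assert (hc : even_cf (xs n) = (pre ++ rest')%list).
  { unfold even_cf. fold (a n) (b n). change (cf_nat (S (b n)) (a n) (b n)) with (Lcf (a n) (b n)).
    rewrite hr. exact he. }
  rewrite hc. apply hz; assumption.
Qed.


End G.

Theorem theorem1 :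
  forall x : R,
    (1 < x)%R ->
    ~ (exists r : Q, Q2R r = x) ->
    exists kappa : nat -> Z,
      forall xs : nat -> Q,
        (forall n, (1 <= xs n)%Q) ->
        Un_cv (fun n => Q2R (xs n)) x ->
        forall k : nat, exists N : nat, forall n : nat, (N <= n)%nat ->
          (varkappa (xs n) k == inject_Z (kappa k))%Q.
Proof.
intros x hx hirr.
assert (hirr' : forall r : Q, Q2R r <> x) by (intros r e; apply hirr; exists r; exact e).
pose proof (G.main_k x hx hirr') as H.
exists (fun k => proj1_sig (constructive_indefinite_description _ (H k))).
intros xs h1 hcv k.
destruct (constructive_indefinite_description _ (H k)) as [z hz]. simpl.
exact (hz xs h1 hcv).
Qed.
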